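(* Let $C$ be a convex subset of a real topological vector space $X$. Then: (i) $\operatorname{fri} C$ is a convex subset of $C$; (ii) for every $x\in\operatorname{fri} C$ and every $y\in C$, the half-open segment $[x,y)=\{(1-t)x+ty: t\in[0,1)\}$ is contained in $\operatorname{fri} C$; (iii) if $\operatorname{fri} C\neq\emptyset$, then $\overline{C}=\overline{\operatorname{fri} C}$; (iv) $\operatorname{fri}(\operatorname{fri} C)=\operatorname{fri} C$.
   Context: For a convex set $C$, a convex subset $F\subseteq C$ is a face of $C$ if for every $x\in F$ and all $y,z\in C$ with $x\in(y,z)=\{(1-t)y+tz:t\in(0,1)\}$ we have $y,z\in F$; $F_{\min}(x,C)$ is the intersection of all faces of $C$ containing $x\in C$. The face relative interior is $\operatorname{fri} C=\{x\in C: C\subseteq\overline{F_{\min}(x,C)}\}$. *)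

(* Defs.v *)
From HB Require Import structures.
From mathcomp Require Import all_boot all_order all_algebra.
From mathcomp Require Import all_classical all_reals all_analysis.
Set Implicit Arguments. Unset Strict Implicit. Unset Printing Implicit Defensive.
Import Order.TTheory GRing.Theory Num.Theory.
Local Open Scope classical_set_scope.
Local Open Scope ring_scope.

Section Faces.
Context {R : realType} {X : topologicalLmodType R}.

Definition convex_set_tvs (C : set X) : Prop :=
  forall y z (t : R), C y -> C z -> 0 <= t <= 1 -> C ((1 - t) *: y + t *: z).

Definition in_open_seg (x y z : X) : Prop :=
  exists t : R, 0 < t < 1 /\ x = (1 - t) *: y + t *: z.

Definition is_face (C F : set X) : Prop :=
  [/\ convex_set_tvs F, F `<=` C &
      forall x y z, F x -> C y -> C z -> in_open_seg x y z -> F y /\ F z].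

Definition Fmin (x : X) (C : set X) : set X :=
  [set z | forall F, is_face C F -> F x -> F z].

Definition fri (C : set X) : set X :=
  [set x | C x /\ C `<=` closure (Fmin x C)].

End Faces.

(* Main.v *)
Require Import Defs.
From HB Require Import structures.
From mathcomp Require Import all_boot all_order all_algebra.
From mathcomp Require Import all_classical all_reals all_analysis.
From mathcomp Require Import lra.
Import Order.TTheory GRing.Theory Num.Theory.
Local Open Scope classical_set_scope.
Local Open Scope ring_scope.

Section S.
Context {R : realType} {X : topologicalLmodType R}.

Lemma seg_cont (x z : X) : continuous (fun t : R^o => (1 - t) *: x + t *: z).
Proof.
move=> t.
apply: (@continuous_comp _ _ _ (fun t : R^o => ((1-t) *: x, t *: z)) (fun p : X*X => p.1 + p.2)); last exact: add_continuous.
apply: (@cvg_pair _ _ _ _ (nbhs ((1-t) *: x)) (nbhs (t *: z))).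
- apply: (@continuous_comp _ _ _ (fun t : R^o => ((1 - t : R^o), x)) (fun p : R^o * X => p.1 *: p.2)); last exact: scale_continuous.
  apply: (@cvg_pair _ _ _ _ (nbhs (1 - t : R^o)) (nbhs x)); last exact: cvg_cst.
  by apply: cvgB; [exact: cvg_cst | exact: cvg_id].
- apply: (@continuous_comp _ _ _ (fun t : R^o => (t, z)) (fun p : R^o * X => p.1 *: p.2)); last exact: scale_continuous.
  apply: (@cvg_pair _ _ _ _ (nbhs (t : R^o)) (nbhs z)); last exact: cvg_cst.
  exact: cvg_id.
Qed.

Lemma seg_closure (S : set X) (x z : X) :
  (forall t : R, 0 <= t < 1 -> S ((1 - t) *: x + t *: z)) -> closure S z.
Proof.
move=> H N zN.
have : nbhs (1 : R^o) ((fun t : R^o => (1 - t) *: x + t *: z) @^-1` N).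
  apply: seg_cont => /=. by rewrite subrr scale0r add0r scale1r.
move=> /nbhs_ballP [e /= e0 He].
set d := Num.min e 1 / 2.
have d0 : 0 < d by rewrite divr_gt0 // lt_min e0 ltr01.
have dm : d < Num.min e 1. rewrite /d ltr_pdivrMr // ltr_pMr ?lt_min ?e0 ?ltr01 //; by rewrite ltr1n.
have d1 : d < 1 by move: dm; rewrite lt_min => /andP[].
have de : d < e by move: dm; rewrite lt_min => /andP[].
exists ((1 - (1 - d)) *: x + (1 - d) *: z); split.
  apply: H. by rewrite subr_ge0 (ltW d1) /= ltrBlDr ltrDl.
apply: He => /=. rewrite /ball /= opprB addrC subrK. by rewrite ger0_norm // ltW.
Qed.

Lemma face_self (C : set X) : convex_set_tvs C -> is_face C C.
Proof. by move=> hC; split=> // x y z _ Cy Cz _. Qed.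

Lemma Fmin_convex (x : X) C : convex_set_tvs (Fmin x C).
Proof.
move=> y z t Fy Fz t01 F hF Fx.
by case: (hF) => cF _ _; apply: cF => //; [apply: Fy | apply: Fz].
Qed.


Lemma Fmin_sub (x : X) C : convex_set_tvs C -> C x -> Fmin x C `<=` C.
Proof. by move=> hC Cx z; apply; [apply: face_self|]. Qed.

Lemma Fmin_mono (x y z : X) C : C y -> C z -> in_open_seg x y z ->
  Fmin y C `<=` Fmin x C.
Proof.
move=> Cy Cz hs w Hw F hF Fx; apply: Hw => //.
by case: (hF) => _ _ hf; case: (hf x y z Fx Cy Cz hs).
Qed.

Lemma fri_seg (C : set X) (x y : X) (t : R) : convex_set_tvs C ->
  fri C x -> C y -> 0 <= t < 1 -> fri C ((1 - t) *: x + t *: y).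
Proof.
move=> hC [Cx Hx] Cy /andP[t0 t1].
have [->|tn0] := eqVneq t 0.
  by rewrite subr0 scale1r scale0r addr0.
split.
  by apply: hC => //; rewrite t0 ltW.
move=> w /Hx; apply: closureS; apply: (Fmin_mono _ _ _ _ Cx Cy).
by exists t; split => //; rewrite lt0r tn0 t0.
Qed.

Lemma mid_comb (x a b : X) (t h : R) :
  (1 - h) *: x + h *: ((1 - t) *: a + t *: b) =
  (1 - t) *: ((1 - h) *: x + h *: a) + t *: ((1 - h) *: x + h *: b).
Proof.
rewrite !scalerDr !scalerA addrACA -scalerDl -mulrDl subrK mul1r.
by rewrite (mulrC h) (mulrC h) addrA.
Qed.
End S.

Theorem proposition4p1 (R : realType) (X : topologicalLmodType R) (C : set X) :
  convex_set_tvs C ->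
  [/\ convex_set_tvs (fri C) /\ fri C `<=` C,
      (forall (x y : X) (t : R), fri C x -> C y -> 0 <= t < 1 ->
         fri C ((1 - t) *: x + t *: y)),
      (fri C !=set0 -> closure C = closure (fri C)) &
      fri (fri C) = fri C].
Proof.
move=> hC.
have friC : fri C `<=` C by move=> x [].
have h2 : 0 <= (2^-1 : R) < 1 by apply/andP; split; lra.
have h2p : 0 < (2^-1 : R) < 1 by apply/andP; split; lra.
have cc : forall (A : set X), closure (closure A) = closure A.
  by move=> A; rewrite -(closure_id (closure A)).1 //; exact: closed_closure.
have cvx : convex_set_tvs (fri C).
  move=> x y t fx fy /andP[t0 t1].
  have [->|t1'] := eqVneq t 1; first by rewrite subrr scale0r add0r scale1r.
  by apply: fri_seg => //; [exact: friC | rewrite t0 lt_neqAle t1' t1].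
split.
- by split.
- by move=> x y t; exact: fri_seg.
- move=> [x0 fx0]; apply/seteqP; split; last exact: closureS.
  have : C `<=` closure (fri C).
    by move=> y Cy; apply: (seg_closure _ x0) => t ht; exact: fri_seg.
  by move=> /closureS; rewrite cc.
- apply/seteqP; split; first by move=> x [].
  move=> x fx; split => //.
  have key : Fmin x C `&` fri C `<=` Fmin x (fri C).
    move=> z [Fz Dz] F hF Fx.
    case: (hF) => cF sF fF.
    pose m := fun w : X => (1 - 2^-1) *: x + 2^-1 *: w.
    have hE : is_face C [set w | C w /\ F (m w)].
      split.
      - move=> a b t [Ca Fa] [Cb Fb] t01; split; first exact: hC.
        rewrite /m mid_comb; exact: cF.
      - by move=> w [].
      - move=> p a b [Cp Fp] Ca Cb [t [t01 pE]].
        have Ma : fri C (m a) by apply: fri_seg.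
        have Mb : fri C (m b) by apply: fri_seg.
        have [|Fa Fb] := fF (m p) (m a) (m b) Fp Ma Mb.
          by exists t; split => //; rewrite /m pE mid_comb.
        by split; split.
    have Ex : C x /\ F (m x).
      by split; [exact: friC | rewrite /m -scalerDl subrK scale1r].
    have [_ Fmz] := Fz _ hE Ex.
    have [|//] := fF (m z) x z Fmz fx Dz.
    by exists 2^-1.
  have Hsub : Fmin x C `<=` closure (Fmin x (fri C)).
    move=> z Fz; apply: (closureS key); apply: (seg_closure _ x) => t /andP[t0 t1].
    split.
      by apply: Fmin_convex; [move=> F _ | exact: Fz | rewrite t0 ltW].
    apply: fri_seg => //; first exact: (Fmin_sub _ _ hC (friC _ fx)).
    by rewrite t0.
  move=> y Dy; have := closureS Hsub (fx.2 y (friC y Dy)).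
  by rewrite cc.
Qed.
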